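(* Let $k\ge 3$. A graph $G$ is $k$-chromatic and mixed-double-critical if and only if $G$ is the complete graph $K_k$.
   Context: All graphs are finite and simple. A graph $G$ is (vertex-)critical if $\chi(G-v)<\chi(G)$ for every vertex $v$. A vertex-critical $k$-chromatic graph $G$ is mixed-double-critical if for every vertex $x\in V(G)$ and every edge $e\in E(G-x)$ we have $\chi(G-x-e)\le\chi(G)-2$. *)

(* Defs.v *)
From mathcomp Require Import all_boot.
Set Implicit Arguments. Unset Strict Implicit. Unset Printing Implicit Defensive.

(* Subgraphs are given by a vertex set V and
   an adjacency relation (only edges with both ends in V count). *)
Definition simple_graph (T : finType) (e : rel T) : Prop :=
  symmetric e /\ irreflexive e.

Definition proper_coloring (T : finType) (V : {set T}) (e : rel T)
  (k : nat) (f : T -> nat) : Prop :=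
  (forall x, x \in V -> f x < k) /\
  (forall x y, x \in V -> y \in V -> e x y -> f x <> f y).

Definition colorable (T : finType) (V : {set T}) (e : rel T) (k : nat) : Prop :=
  exists f, proper_coloring V e k f.

(* Since an irreflexive graph
   is always #|T|-colourable, the least such k lies in [0, #|T|], so chi is
   the first k in iota 0 (#|T|+1) that works. *)
Definition colorableb (T : finType) (V : {set T}) (e : rel T) (k : nat) : bool :=
  [exists f : {ffun T -> 'I_k.+1},
     [forall x, (x \in V) ==> (f x < k)] &&
     [forall x, forall y, [&& x \in V, y \in V & e x y] ==> (f x != f y)]].

Lemma colorableP (T : finType) (V : {set T}) (e : rel T) (k : nat) :
  reflect (colorable V e k) (colorableb V e k).
Proof.
apply: (iffP existsP) => [[f /andP[/forallP H1 /forallP H2]]|[f [H1 H2]]].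
  exists (fun x => nat_of_ord (f x)); split => [x xV|x y xV yV exy].
    by have := H1 x; rewrite xV.
  move=> E; have /forallP := H2 x => /(_ y); rewrite xV yV exy /=.
  by rewrite -(inj_eq val_inj) /= E eqxx.
exists [ffun x => inord (f x)]; apply/andP; split; apply/forallP => x.
  apply/implyP => xV; rewrite ffunE inordK; first exact: H1.
  by apply: ltnW; rewrite ltnS; exact: H1.
apply/forallP => y; apply/implyP => /and3P[xV yV exy]; rewrite !ffunE.
apply/negP => /eqP /(congr1 val) /=; rewrite !inordK.
- exact: H2.
- by rewrite ltnS; apply: ltnW; exact: H1.
- by rewrite ltnS; apply: ltnW; exact: H1.
Qed.

Definition chi (T : finType) (V : {set T}) (e : rel T) : nat :=
  head 0 [seq k <- iota 0 #|T|.+1 | colorableb V e k].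

Definition del_edge (T : finType) (e : rel T) (u v : T) : rel T :=
  fun x y => e x y && ~~ (((x == u) && (y == v)) || ((x == v) && (y == u))).

Definition chrom (T : finType) (e : rel T) : nat := chi [set: T] e.

Definition vertex_critical (T : finType) (e : rel T) : Prop :=
  forall v : T, chi ([set: T] :\ v) e < chrom e.

Definition mixed_double_critical (T : finType) (e : rel T) : Prop :=
  vertex_critical e /\
  forall x u v : T, u != x -> v != x -> e u v ->
    chi ([set: T] :\ x) (del_edge e u v) <= chrom e - 2.

Definition is_complete_graph (T : finType) (e : rel T) (k : nat) : Prop :=
  #|T| = k /\ forall x y : T, x != y -> e x y.

(* Main.v *)
Require Import Defs.
From mathcomp Require Import all_boot.
From mathcomp Require Import zify.
Set Implicit Arguments. Unset Strict Implicit. Unset Printing Implicit Defensive.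

Lemma head_filter_le (p : pred nat) m n k :
  m <= k -> k < m + n -> p k -> head 0 [seq i <- iota m n | p i] <= k.
Proof.
elim: n m => [|n IH] m H1 H2 pk; first by exfalso; lia.
rewrite /=; case: ifP => pm //=.
have km : k != m by apply/eqP => E; rewrite -E pk in pm.
apply: IH => //; lia.
Qed.

Lemma head_filter_p (p : pred nat) m n k :
  m <= k -> k < m + n -> p k -> p (head 0 [seq i <- iota m n | p i]).
Proof.
elim: n m => [|n IH] m H1 H2 pk; first by exfalso; lia.
rewrite /=; case: ifP => pm //=.
have km : k != m by apply/eqP => E; rewrite -E pk in pm.
apply: IH => //; lia.
Qed.

Lemma head_filter_bound (p : pred nat) n : head 0 [seq i <- iota 0 n.+1 | p i] <= n.
Proof.
case E: [seq i <- iota 0 n.+1 | p i] => [|a s] //=.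
have : a \in [seq i <- iota 0 n.+1 | p i] by rewrite E mem_head.
by rewrite mem_filter mem_iota => /andP[_ /andP[_]]; rewrite add0n ltnS.
Qed.

Lemma colorable_mono (T : finType) (V : {set T}) e m m' :
  colorable V e m -> m <= m' -> colorable V e m'.
Proof. move=> [f [H1 H2]] mm; exists f; split => // x xV; exact: leq_trans (H1 x xV) mm. Qed.

Lemma colorable_map (T : finType) (V W : {set T}) (e : rel T) (h : T -> T) :
  (forall z, z \in V -> h z \in W) ->
  (forall a b, a \in V -> b \in V -> e a b -> h a != h b) ->
  colorable V e #|W|.
Proof.
move=> hW hne; exists (fun z => index (h z) (enum W)); split.
  by move=> z zV; rewrite cardE index_mem mem_enum hW.
move=> a b aV bV eab E; move/eqP: (hne a b aV bV eab); apply.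
have ha : h a \in enum W by rewrite mem_enum hW.
have hb : h b \in enum W by rewrite mem_enum hW.
by rewrite -(nth_index (h a) ha) E nth_index.
Qed.

Lemma chi_le (T : finType) (V : {set T}) e m : colorable V e m -> chi V e <= m.
Proof.
move=> Hc; rewrite /chi.
case: (leqP m #|T|) => hm.
  apply: (@head_filter_le (colorableb V e) 0 #|T|.+1 m) => //.
  exact/colorableP.
exact: leq_trans (head_filter_bound _ _) (ltnW hm).
Qed.

Lemma colorable_id (T : finType) (V : {set T}) (e : rel T) :
  irreflexive e -> colorable V e #|V|.
Proof.
move=> irr; apply: (colorable_map (h:=id)) => // a b _ _ eab.
by apply/eqP => E; rewrite E irr in eab.
Qed.

Lemma chi_col (T : finType) (V : {set T}) e : irreflexive e -> colorable V e (chi V e).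
Proof.
move=> irr; apply/colorableP; rewrite /chi.
apply: (@head_filter_p (colorableb V e) 0 #|T|.+1 #|T|) => //.
apply/colorableP; apply: (@colorable_mono _ _ _ #|V|); first exact: colorable_id.
exact: max_card.
Qed.

Lemma complete_lb (T : finType) (V : {set T}) (e : rel T) m :
  (forall x y, x != y -> e x y) -> colorable V e m -> #|V| <= m.
Proof.
move=> Hc [f [H1 H2]].
have -> : #|V| = size (map f (enum V)) by rewrite size_map cardE.
rewrite -(size_iota 0 m); apply: uniq_leq_size.
  rewrite map_inj_in_uniq ?enum_uniq // => x y; rewrite !mem_enum => xV yV E.
  case: (eqVneq x y) => // nxy; exfalso; exact: H2 x y xV yV (Hc _ _ nxy) E.
move=> z /mapP[x]; rewrite mem_enum => xV ->; rewrite mem_iota add0n /=; exact: H1.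
Qed.

Theorem theorem34 (k : nat) (T : finType) (e : rel T) :
  3 <= k -> simple_graph e ->
  (chrom e = k /\ mixed_double_critical e) <-> is_complete_graph e k.
Proof.
move=> k3 [sym irr].
have chi_comp : (forall x y : T, x != y -> e x y) -> chrom e = #|T|.
  move=> Hc; apply/eqP; rewrite eqn_leq; apply/andP; split.
    by rewrite -cardsT; apply: chi_le; apply: colorable_id.
  rewrite -cardsT; apply: complete_lb Hc _; exact: chi_col.
have irrd : forall u v, irreflexive (del_edge e u v).
  by move=> u v a; rewrite /del_edge irr.
split.
- move=> [ck [vc mdc]].
  have Hc : forall x y : T, x != y -> e x y.
    move=> x y nxy; apply/negPn/negP => nexy.
    suff Hcol : colorable [set: T] e k.-1.
      by have := chi_le Hcol; rewrite -/(chrom e) ck; lia.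
    case: (pickP (fun u => (u != x) && e y u)) => [u /andP[ux eyu] | none].
    + have := mdc x y u; rewrite eq_sym nxy ux eyu ck => /(_ isT isT isT) Hle.
      have [c [c1 c2]] := chi_col ([set: T] :\ x) (irrd y u).
      exists (fun z => if (z == x) || (z == y) then k - 2 else c z); split.
        move=> z _; case: ifP => [_|/norP[zx zy]]; first lia.
        have := c1 z; rewrite !inE zx /= => /(_ isT) H; lia.
      move=> a b _ _ eab.
      have uy : u != y by apply/eqP => E; rewrite E irr in eyu.
      case: (boolP ((a == x) || (a == y))) => ha;
        case: (boolP ((b == x) || (b == y))) => hb.
      * exfalso; move: eab nexy.
        by case/orP: ha => /eqP ->; case/orP: hb => /eqP ->; rewrite ?irr // sym => ->.
      * case/norP: hb => bx bY.
        have := c1 b; rewrite !inE bx /= => /(_ isT) H; lia.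
      * case/norP: ha => ax ay.
        have := c1 a; rewrite !inE ax /= => /(_ isT) H; lia.
      * case/norP: ha => ax ay; case/norP: hb => bx bY.
        apply: c2; rewrite ?inE ?ax ?bx //.
        by rewrite /del_edge eab (negbTE ay) (negbTE bY) andbF.
    + have iso : forall u, e y u = false.
        move=> u; case: (eqVneq u x) => [->|ux]; first by rewrite sym; apply/negbTE.
        by have := none u; rewrite /= ux.
      have := vc y; rewrite ck => hlt.
      have [c [c1 c2]] := chi_col ([set: T] :\ y) irr.
      exists (fun z => if z == y then 0 else c z); split.
        move=> z _; case: ifP => [_|zy]; first lia.
        have := c1 z; rewrite !inE zy /= => /(_ isT) H; lia.
      move=> a b _ _ eab.
      case: (eqVneq a y) => [ay|ay]; first by rewrite ay iso in eab.
      case: (eqVneq b y) => [by'|by']; first by rewrite by' sym iso in eab.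
      by apply: c2; rewrite ?inE ?ay ?by'.
  split => //; by rewrite -ck chi_comp.
- move=> [cardT Hc].
  have ck : chrom e = k by rewrite chi_comp.
  split => //; split.
  + move=> v; rewrite ck.
    apply: leq_ltn_trans (chi_le (colorable_id _ irr)) _.
    have := cardsD1 v [set: T]; rewrite cardsT cardT in_setT /=; lia.
  + move=> x u v ux vx euv; rewrite ck.
    have uv : u != v by apply/eqP => E; rewrite E irr in euv.
    pose W := [set: T] :\ x :\ v.
    have cW : #|W| = k - 2.
      have := cardsD1 x [set: T]; rewrite cardsT cardT in_setT /=.
      have := cardsD1 v ([set: T] :\ x); rewrite !inE vx /=; rewrite /W; lia.
    rewrite -cW; apply: chi_le.
    apply: (colorable_map (h := fun z => if z == v then u else z)).
      move=> z; rewrite /W !inE andbT => zx; case: (eqVneq z v) => [_|zv].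
        by rewrite uv ux.
      by rewrite zv zx.
    move=> a b _ _; rewrite /del_edge => /andP[eab nd].
    case: (eqVneq a v) => [av|av]; case: (eqVneq b v) => [bv|bv].
    * by rewrite av bv irr in eab.
    * apply/eqP => E; move: nd; by rewrite av E !eqxx orbT.
    * apply/eqP => E; move: nd; by rewrite bv E !eqxx.
    * apply/eqP => E; by rewrite E irr in eab.
Qed.
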